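(* Let $G=(V,E)$ be a connected graph with $\delta(G)\geq 3$ and vertex connectivity $\kappa(G)\geq 2$. Then $V$ can be partitioned into three sets $L$, $R$, $O$ with $|O|\leq 1$ such that every vertex of $L$ has at least two neighbors in $R\cup O$ and every vertex of $R$ has at least two neighbors in $L\cup O$. Moreover, if $G$ contains a cycle of even length, such a partition exists with $O=\emptyset$.
   Context: All graphs are finite and simple. A vertex cut of a connected graph is a set of vertices whose removal leaves a disconnected or trivial graph; $\kappa(G)$ is the minimum size of a vertex cut. *)

(* Defs.v *)
(* A finite simple graph is a symmetric irreflexive
   relation e on a finType T (vertex set = all of T). *)
From mathcomp Require Import all_boot.
Set Implicit Arguments. Unset Strict Implicit. Unset Printing Implicit Defensive.

Section Graphs.
Variables (T : finType) (e : rel T).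

Definition induced_rel (A : {set T}) : rel T :=
  [rel x y | [&& e x y, x \in A & y \in A]].

Definition connected_on (A : {set T}) : bool :=
  [forall x in A, forall y in A, connect (induced_rel A) x y].

Definition connected_graph : bool := connected_on setT.

Definition nbhd (x : T) : {set T} := [set y | e x y].
Definition deg (x : T) : nat := #|nbhd x|.
Definition min_degree_ge (k : nat) : Prop := forall x, k <= deg x.

Definition vertex_cut (S : {set T}) : bool :=
  ~~ connected_on (~: S) || (#|~: S| <= 1).

(* kappa(G): the minimum size of a vertex cut (setT is always a cut). *)
Definition kappa : nat :=
  \big[minn/#|T|]_(S : {set T} | vertex_cut S) #|S|.

Definition has_even_cycle : Prop :=
  exists s : seq T, [/\ uniq s, 3 <= size s, cycle e s & ~~ odd (size s)].

Definition partition3 (L R O : {set T}) : Prop :=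
  [/\ [disjoint L & R], [disjoint L & O], [disjoint R & O] & L :|: R :|: O = setT].

Definition good_partition (L R O : {set T}) : Prop :=
  [/\ partition3 L R O,
      #|O| <= 1,
      (forall x, x \in L -> 2 <= #|nbhd x :&: (R :|: O)|) &
      (forall x, x \in R -> 2 <= #|nbhd x :&: (L :|: O)|)].

End Graphs.

(* Main.v *)
Require Import Defs.
From mathcomp Require Import all_boot.
From mathcomp Require Import zify.
Set Implicit Arguments.

Section MaxCut.
Variables (T : finType) (e : rel T).
Hypotheses (e_sym : symmetric e) (e_irr : irreflexive e).

Definition cc (L : {set T}) u v : nat := (e u v && ((u \in L) != (v \in L))).
Definition W (L : {set T}) := \sum_u \sum_v cc L u v.
Definition tog (L : {set T}) x := [set y | (y \in L) != (y == x)].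

Lemma Wsplit L x : W L = \sum_v cc L x v + \sum_(u | u != x) cc L u x
   + \sum_(u | u != x) \sum_(v | v != x) cc L u v.
Proof.
rewrite /W (bigD1 x) //= -addnA; congr (_ + _); rewrite -big_split /=.
by apply: eq_bigr => u _; rewrite (bigD1 x).
Qed.

Lemma symsum L x : \sum_(u | u != x) cc L u x = \sum_v cc L x v.
Proof.
rewrite [RHS](bigD1 x) //= /cc e_irr /= add0n.
by apply: eq_bigr => u _; rewrite e_sym eq_sym.
Qed.

Lemma Ktog L x : \sum_(u | u != x) \sum_(v | v != x) cc (tog L x) u v
  = \sum_(u | u != x) \sum_(v | v != x) cc L u v.
Proof.
apply: eq_bigr => u hu; apply: eq_bigr => v hv.
by rewrite /cc !inE (negbTE hu) (negbTE hv); case: (u \in L); case: (v \in L).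
Qed.

Lemma comp L x : \sum_v cc (tog L x) x v + \sum_v cc L x v = deg e x.
Proof.
rewrite -big_split /deg -sum1_card [RHS]big_mkcond /=.
apply: eq_bigr => v _; rewrite /cc !inE eqxx.
case: (eqVneq v x) => [->|hv]; first by rewrite e_irr.
rewrite ?(negbTE hv); by case: (e x v); case: (x \in L); case: (v \in L).
Qed.

Lemma cardside L x : \sum_v cc L x v =
  #|nbhd e x :&: [set v | (x \in L) != (v \in L)]|.
Proof.
rewrite -sum1_card [RHS]big_mkcond /=; apply: eq_bigr => v _.
by rewrite /cc !inE; case: (e x v).
Qed.

Lemma maxcut_good L x : (forall L', W L' <= W L) -> 3 <= deg e x ->
  2 <= #|nbhd e x :&: [set v | (x \in L) != (v \in L)]|.
Proof.
move=> Hmax Hd; have := Hmax (tog L x).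
rewrite (Wsplit L x) (Wsplit (tog L x) x) !symsum Ktog -cardside.
have := comp L x; lia.
Qed.
End MaxCut.

Theorem mainTheorem5 (T : finType) (e : rel T)
    (e_sym : symmetric e) (e_irr : irreflexive e)
    (Hconn : connected_graph e)
    (Hdeg : min_degree_ge e 3)
    (Hkappa : 2 <= kappa e) :
  (exists L R O : {set T}, good_partition e L R O) /\
  (has_even_cycle e -> exists L R : {set T}, good_partition e L R set0).
Proof.
have [L _ Hmax] := @arg_maxnP _ (set0 : {set T}) xpredT (W e) isT.
have Hm : forall L', W e L' <= W e L by move=> L'; apply: Hmax.
have G : good_partition e L (~: L) set0.
  split.
  - split.
    + by rewrite -setI_eq0 setICr.
    + by rewrite -setI_eq0 setI0.
    + by rewrite -setI_eq0 setI0.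
    + by rewrite setU0 setUCr.
  - by rewrite cards0.
  - move=> x hx; have := @maxcut_good T e e_sym e_irr L x Hm (Hdeg x).
    suff -> : ~: L :|: set0 = [set v | (x \in L) != (v \in L)] by [].
    by apply/setP => v; rewrite !inE hx; case: (v \in L).
  - move=> x hx; have := @maxcut_good T e e_sym e_irr L x Hm (Hdeg x).
    rewrite inE in hx.
    suff -> : L :|: set0 = [set v | (x \in L) != (v \in L)] by [].
    by apply/setP => v; rewrite !inE (negbTE hx); case: (v \in L).
split; first by exists L, (~: L), set0.
by move=> _; exists L, (~: L).
Qed.
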